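(* Let $t$ and $i$ be integers with $t \geq 1$, $0 \leq i < t$ and $t > 16i^{2} - i$. Let $H$ be a Hadamard matrix of order $4t+4i$, and let $M$ be the $(4t+4i) \times 4t$ matrix obtained from $H$ by deleting any $4i$ of its columns. Let $r_1, \dots, r_{4t+4i}$ be the rows of $M$, put $r_{4t+4i+j} = -r_j$ for $1 \leq j \leq 4t+4i$, and let $C_M = \{ \tfrac{1}{2}(r_j + \underline{1}) : 1 \leq j \leq 8t+8i\} \subseteq \{0,1\}^{4t}$, where $\underline{1}$ is the all-ones vector of length $4t$. Then the binary code $C_M$ is maximal: for every $v \in \{0,1\}^{4t} \setminus C_M$, the code $C_M \cup \{v\}$ has strictly smaller minimum distance than $C_M$.
   Context: A Hadamard matrix of order $n$ is an $n \times n$ matrix $H$ with entries in $\{\pm 1\}$ satisfying $HH^{\top} = nI_n$. A binary code of length $m$ is a subset of $\{0,1\}^m$; its minimum distance is the minimum Hamming distance between two distinct codewords. A code is called maximal if including any additional word as a codeword necessarily decreases the minimum distance. *)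

(* Defs.v *)
From HB Require Import structures.
From mathcomp Require Import all_boot all_order all_algebra.
Set Implicit Arguments. Unset Strict Implicit. Unset Printing Implicit Defensive.
Import Order.TTheory GRing.Theory Num.Theory.

Local Open Scope ring_scope.

Definition hadamard (n : nat) (H : 'M[int]_n) : Prop :=
  (forall a b, H a b = 1 \/ H a b = -1) /\ H *m H^T = (n%:R)%:M.

(* Binary words of length m: {0,1}^m, with true = 1, false = 0. *)
Definition word (m : nat) := {ffun 'I_m -> bool}.

Definition hdist (m : nat) (x y : word m) : nat := #|[set k | x k != y k]|.

(* Minimum distance of a code: minimum of hdist over pairs of distinct
   codewords.  The neutral value m.+1 (larger than any distance) is only
   returned when the code has fewer than two codewords. *)
Definition min_dist (m : nat) (C : {set word m}) : nat :=
  \big[minn/m.+1]_(x in C) \big[minn/m.+1]_(y in C | y != x) hdist x y.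

Definition maximal_code (m : nat) (C : {set word m}) : Prop :=
  forall v : word m, v \notin C -> (min_dist (v |: C) < min_dist C)%N.

(* The binary word (r + 1)/2 associated with a (+1/-1) vector r. *)
Definition pm_to_word (m : nat) (r : 'I_m -> int) : word m :=
  [ffun k => r k == 1].

(* C_M for M the matrix whose columns are the columns f 0, ..., f (m-1) of H:
   rows r_j of M together with their negatives -r_j, mapped by r |-> (r+1)/2. *)
Definition code_of (n m : nat) (H : 'M[int]_n) (f : 'I_m -> 'I_n) : {set word m} :=
  [set pm_to_word (fun k => H j (f k)) | j : 'I_n] :|:
  [set pm_to_word (fun k => - H j (f k)) | j : 'I_n].

(* Main.v *)
Require Import Defs.
From mathcomp Require Import all_boot all_order all_algebra zify.
Set Implicit Arguments. Unset Strict Implicit. Unset Printing Implicit Defensive.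
Import Order.TTheory GRing.Theory Num.Theory.

Lemma bigminn_le (I : finType) (P : pred I) (F : I -> nat) d j :
  P j -> (\big[minn/d]_(i | P i) F i <= F j)%N.
Proof.
move=> Pj; rewrite unlock.
have : j \in index_enum I by rewrite mem_index_enum.
elim: (index_enum I) => //= a s IH; rewrite inE => /orP[/eqP<-|js].
  by rewrite Pj geq_minl.
case: (P a); last exact: IH.
by rewrite geq_min IH ?orbT.
Qed.

Lemma bigminn_gt (I : finType) (P : pred I) (F : I -> nat) d K :
  (K < d)%N -> (forall i, P i -> K < F i)%N -> (K < \big[minn/d]_(i | P i) F i)%N.
Proof.
move=> Kd H; elim/big_ind: _ => // x y Hx Hy.
by rewrite leq_min Hx Hy.
Qed.

Local Open Scope ring_scope.

Definition sgn m (x : word m) (k : 'I_m) : int := if x k then 1 else -1.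

Lemma sgn_pm m (r : 'I_m -> int) k : (r k = 1 \/ r k = -1) -> sgn (pm_to_word r) k = r k.
Proof. by rewrite /sgn ffunE; case=> ->. Qed.

Lemma dot_hdist m (x y : word m) :
  \sum_k sgn x k * sgn y k = (m%:R : int) - 2 * (hdist x y)%:R.
Proof.
have E : forall k, sgn x k * sgn y k = 1 - 2 * (if x k != y k then 1 else 0).
  by move=> k; rewrite /sgn; case: (x k); case: (y k).
under eq_bigr do rewrite E.
rewrite sumrB sumr_const card_ord -mulr_sumr -big_mkcond /= sumr_const.
by rewrite /hdist cardsE.
Qed.
Lemma col_orth n (H : 'M[int]_n) (c : int) : c != 0 -> H *m H^T = c%:M -> H^T *m H = c%:M.
Proof.
move=> c0 eH.
pose K := map_mx (intr : int -> rat) H.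
have eK : K *m K^T = (c%:~R)%:M by rewrite /K map_trmx -map_mxM eH map_scalar_mx.
have : K *m ((c%:~R : rat)^-1 *: K^T) = 1%:M.
  by rewrite -scalemxAr eK scale_scalar_mx mulVf ?intr_eq0.
move/mulmx1C; rewrite -scalemxAl => h.
have eK' : K^T *m K = (c%:~R)%:M.
  have := congr1 (fun M => (c%:~R : rat) *: M) h.
  by rewrite scalerA mulfV ?intr_eq0 // scale1r scalemx1.
apply/matrixP => a b; have := congr1 (fun M : 'M[rat]_n => M a b) eK'.
rewrite /K map_trmx -map_mxM !mxE.
by case: (a == b) => /=; [rewrite !mulr1n => /intr_inj | rewrite !mulr0n => /eqP; rewrite intr_eq0 => /eqP].
Qed.

Lemma split_sum n m (f : 'I_m -> 'I_n) (g : 'I_n -> int) : injective f ->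
  \sum_c g c = \sum_k g (f k) + \sum_(c in ~: (f @: setT)) g c.
Proof.
move=> fi; rewrite (bigID (mem (f @: setT))) /= big_imset /=; last by move=> a b _ _; apply: fi.
congr (_ + _); first by apply: eq_bigl => k; rewrite in_setT.
by apply: eq_bigl => c; rewrite in_setC.
Qed.

Lemma rest_bound n m (f : 'I_m -> 'I_n) (g : 'I_n -> int) : injective f ->
  (forall c, `|g c| <= 1) -> `|\sum_(c in ~: (f @: setT)) g c| <= (n - m)%N%:R.
Proof.
move=> fi hg; apply: le_trans; first exact: ler_norm_sum.
apply: le_trans; first by apply: ler_sum => c _; exact: hg.
rewrite sumr_const.
have : (#|~: (f @: setT)| = n - m)%N.
  have e := cardsC (f @: setT); rewrite card_imset // cardsT !card_ord in e; lia.
by move=> ->.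
Qed.

Definition X n m (H : 'M[int]_n) (f : 'I_m -> 'I_n) j (e : bool) : word m :=
  pm_to_word (fun k => (-1) ^+ e * H j (f k)).

Lemma memC n m (H : 'M[int]_n) (f : 'I_m -> 'I_n) x :
  x \in code_of H f -> exists j e, x = X H f j e.
Proof.
rewrite /code_of inE => /orP[/imsetP[j _ ->]|/imsetP[j _ ->]]; exists j;
  [exists false|exists true]; apply/ffunP => k; rewrite !ffunE /= ?mul1r ?expr1 ?mulN1r //.
Qed.

Lemma XinC n m (H : 'M[int]_n) (f : 'I_m -> 'I_n) j e : X H f j e \in code_of H f.
Proof.
rewrite /code_of inE; case: e; apply/orP; [right|left]; apply/imsetP; exists j => //;
  apply/ffunP => k; rewrite !ffunE /= ?expr1 ?mulN1r ?mul1r //.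
Qed.

Lemma sgnX n m (H : 'M[int]_n) (f : 'I_m -> 'I_n) j e k :
  (forall a b, H a b = 1 \/ H a b = -1) -> sgn (X H f j e) k = (-1) ^+ e * H j (f k).
Proof.
move=> hpm; apply: sgn_pm; case: e; case: (hpm j (f k)) => ->;
  rewrite ?expr1 ?expr0 ?mulN1r ?mul1r ?opprK; auto.
Qed.

Theorem theorem3 (t i : nat) (H : 'M[int]_(4 * t + 4 * i))
    (f : 'I_(4 * t) -> 'I_(4 * t + 4 * i)) :
  (1 <= t)%N -> (i < t)%N -> (16 * i ^ 2 - i < t)%N ->
  hadamard H ->
  {homo f : a b / (a < b)%N} ->
  maximal_code (code_of H f).
Proof.
move=> t1 it ti [hpm hH] hf.
have fi : injective f.
  move=> a b eab; apply/val_inj; case: (ltngtP a b) => // h; have := hf _ _ h;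
  by rewrite eab ltnn.
have pm1 : forall x y : int, (x = 1 \/ x = -1) -> (y = 1 \/ y = -1) -> `|x * y| <= 1.
  by move=> x y [->|->] [->|->].
pose S j l := \sum_k H j (f k) * H l (f k).
have Hfull : forall j l, \sum_c H j c * H l c = (4*t+4*i)%N%:R *+ (j == l).
  move=> j l; have := congr1 (fun M : 'M[int]_(4*t+4*i) => M j l) hH; rewrite !mxE => <-.
  by apply: eq_bigr => c _; rewrite mxE.
have Sbound : forall j l, j != l -> `|S j l| <= (4 * i)%N%:R.
  move=> j l jl; rewrite /S; have := Hfull j l; rewrite (negbTE jl) mulr0n (split_sum _ fi) => /eqP.
  rewrite addr_eq0 => /eqP ->; rewrite normrN.
  have := rest_bound (g := fun c => H j c * H l c) fi (fun c => pm1 _ _ (hpm j c) (hpm l c)).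
  by rewrite addKn.
have Spos : forall j, 0 <= S j j.
  by move=> j; apply: sumr_ge0 => k _; case: (hpm j (f k)) => ->.
have PX : forall j e l e', \sum_k sgn (X H f j e) k * sgn (X H f l e') k
    = (-1)^+e * (-1)^+e' * S j l.
  by move=> j e l e'; rewrite /S mulr_sumr; apply: eq_bigr => k _; rewrite !sgnX // mulrACA.
have Claim1 : forall x y, x \in code_of H f -> y \in code_of H f -> x != y ->
    \sum_k sgn x k * sgn y k <= (4*i)%N%:R.
  move=> x y /memC[j [e ->]] /memC[l [e' ->]] nxy; rewrite PX.
  case: (eqVneq j l) nxy => [<-|jl] nxy.
    case: (eqVneq e e') => [ee|ee]; first by rewrite ee eqxx in nxy.
    have -> : (-1)^+e * (-1)^+e' = -1 :> int by clear nxy; move: ee; case: e; case: e'.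
    rewrite mulN1r; apply: (le_trans _ (ler0n _ _)); rewrite oppr_le0; exact: Spos.
  apply: le_trans (ler_norm _) _.
  have -> : `|(-1)^+e * (-1)^+e' * S j l| = `|S j l| by clear nxy; case: e; case: e'; rewrite /= ?mulN1r ?mul1r ?expr0 ?normrN.
  exact: Sbound.
have Claim2 : forall v : word (4*t), exists j e,
    (4*i)%N%:R < \sum_k sgn (X H f j e) k * sgn v k.
  move=> v.
  pose w c := if [pick k | f k == c] is Some k then sgn v k else 1.
  have wf : forall k, w (f k) = sgn v k.
    by move=> k; rewrite /w; case: pickP => [k' /eqP /fi -> | /(_ k)] //; rewrite eqxx.
  have wpm : forall c, w c = 1 \/ w c = -1.
    by move=> c; rewrite /w; case: pickP => * //; [rewrite /sgn; case: (v _)|]; auto.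
  pose a j := \sum_c H j c * w c.
  have sumsq : \sum_j a j * a j = (4*t+4*i)%N%:R * (4*t+4*i)%N%:R.
    pose W : 'cV[int]_(4*t+4*i) := \col_c w c.
    have hHT := col_orth _ hH.
    have e1 : ((H *m W)^T *m (H *m W)) 0 0 = \sum_j a j * a j.
      rewrite mxE; apply: eq_bigr => j _; rewrite !mxE /a.
      by congr (_ * _); apply: eq_bigr => c _; rewrite mxE.
    have e2 : (H *m W)^T *m (H *m W) = (4*t+4*i)%N%:R *: (W^T *m W).
      rewrite trmx_mul -mulmxA (mulmxA H^T) hHT; last by rewrite pnatr_eq0; lia.
      by rewrite mul_scalar_mx scalemxAr.
    rewrite -e1 e2 mxE; congr (_ * _); rewrite mxE.
    rewrite (eq_bigr (fun _ => 1)); first by rewrite sumr_const card_ord.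
    by move=> c _; rewrite !mxE; case: (wpm c) => ->.
  have hn : (64 * i^2 < 4*t+4*i)%N by nia.
  have [j hj] : exists j, ((64 * i^2)%N%:R < a j * a j).
    case: (boolP [exists j, (64 * i^2)%N%:R < a j * a j]) => [/existsP//|/existsPn hall].
    exfalso.
    have : \sum_j a j * a j <= \sum_(j : 'I_(4*t+4*i)) ((64 * i^2)%N%:R : int).
      by apply: ler_sum => j _; rewrite leNgt; exact: hall.
    rewrite sumsq sumr_const card_ord -mulr_natr; nia.
  have ha : a j = \sum_k H j (f k) * sgn v k + \sum_(c in ~: (f @: setT)) H j c * w c.
    by rewrite /a (split_sum _ fi); congr (_ + _); apply: eq_bigr => k _; rewrite wf.
  have hr := rest_bound (g := fun c => H j c * w c) fi (fun c => pm1 _ _ (hpm j c) (wpm c)).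
  rewrite addKn ler_norml in hr.
  set S' := \sum_k H j (f k) * sgn v k in ha.
  set r := \sum_(c in ~: (f @: setT)) H j c * w c in ha hr.
  have : (4*i)%N%:R < S' \/ S' < - (4*i)%N%:R.
    move: hj hr; rewrite ha; clear ha; move: S' r => x y; move=> h1 /andP[h2 h3]; nia.
  have PXv : forall e, \sum_k sgn (X H f j e) k * sgn v k = (-1)^+e * S'.
    by move=> e; rewrite /S' mulr_sumr; apply: eq_bigr => k _; rewrite sgnX // mulrA.
  case=> hS; [exists j, false | exists j, true]; rewrite PXv /= ?expr0 ?mul1r ?mulN1r //.
  by rewrite ltrNr.
move=> v vC.
have [j [e hc]] := Claim2 v.
have cC := XinC H f j e.
set c := X H f j e in hc cC.
have cv : c != v by apply: contraNneq vC => <-.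
have dvc := dot_hdist v c.
have hc' : (4*i)%N%:R < \sum_k sgn v k * sgn c k.
  by rewrite (eq_bigr (fun k => sgn c k * sgn v k)) // => k _; rewrite mulrC.
apply: (@leq_ltn_trans (hdist v c)).
  rewrite /min_dist; apply: leq_trans; first by apply: (@bigminn_le _ _ _ _ v); rewrite setU11.
  apply: (@bigminn_le _ _ _ _ c); by rewrite setU1r.
rewrite /min_dist; apply: bigminn_gt.
  by rewrite ltnS /hdist; apply: leq_trans (max_card _) _; rewrite card_ord.
move=> x xC; apply: bigminn_gt.
  by rewrite ltnS /hdist; apply: leq_trans (max_card _) _; rewrite card_ord.
move=> y /andP[yC yx].
have := Claim1 x y xC yC; rewrite eq_sym => /(_ yx) hxy.
have dxy := dot_hdist x y.
suff : ((hdist v c)%:R < (hdist x y)%:R :> int) by rewrite ltr_nat.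
lia.
Qed.
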